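(* In the setting below, the map $\varphi:B\to \mathcal A$ defined by $\varphi(a_g\delta_g\#v_h)=a_g\otimes u_g\otimes v_h$ ($a_g\in E_g$) is a homomorphism of $K$-algebras, and there is an exact sequence of $K$-algebras $$0\longrightarrow D\longrightarrow B\xrightarrow{\ \varphi\ }\varphi(C)\longrightarrow 0,$$ where $\varphi(B)=\varphi(C)$ and $\ker\varphi=D$. In particular $\varphi$ restricts to an injective algebra homomorphism on $C$, and $B_0$ is isomorphic to a subalgebra of $\mathcal A$.
   Context: Groupoid conventions. A groupoid is a small category with all morphisms invertible, regarded as the set $G$ of morphisms. For $g\in G$ we have $d(g)=g^{-1}g$ and $r(g)=gg^{-1}$. The product $gh$ is defined iff $d(g)=r(h)$, and then $d(gh)=d(h)$, $r(gh)=r(g)$. $G^2=\{(g,h): d(g)=r(h)\}$, and $G_0$ is the set of identities. Actions. An action of $G$ on a ring $R$ is a pair $\beta=(\{E_g\},\{\beta_g\})$ where each $E_g=E_{r(g)}$ is an ideal of $R$, each $\beta_g:E_{g^{-1}}\to E_g$ is a ring isomorphism, $\beta_e=\mathrm{id}$ for $e\in G_0$, and $\beta_g\beta_h=\beta_{gh}$ on $E_{h^{-1}}$ for $(g,h)\in G^2$. Setting. $K$ is a commutative unital ring and $G$ is a finite groupoid. $R$ is a unital $K$-algebra with an action $\beta$ of $G$ by $K$-linear maps such that each $E_e$, $e\in G_0$, has an identity $1_e$, and $R=\bigoplus_{e\in G_0}E_e$. Put $1_g=1_{r(g)}$. Skew groupoid ring and $B$: - $R\star_\beta G=\bigoplus_g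 E_g\delta_g$ with $(x\delta_g)(y\delta_h)=x\beta_g(y)\delta_{gh}$ if $(g,h)\in G^2$ and $0$ otherwise; it is $G$-graded with $g$-component $E_g\delta_g$. - $KG^*$ has $K$-basis $\{v_g\}$ with $v_gv_h=\delta_{g,h}v_g$; it acts on $G$-graded algebras by $v_h\cdot a=a_h$ (the $h$-component). - $B=(R\star_\beta G)\#KG^*=\bigoplus_{g,h}E_g\delta_g\#v_h$, with $(x\#v_g)(y\#v_h)=x(v_{gh^{-1}}\cdot y)\#v_h$ if $d(g)=d(h)$, and $0$ otherwise. - $C=\bigoplus_{d(g)=r(h)}E_g\delta_g\#v_h$, $D=\bigoplus_{d(g)\neq r(h)}E_g\delta_g\#v_h$, and $B_0=\bigoplus_{d(g)=r(g)=r(h)}E_g\delta_g\#v_h$. Weak bialgebras $KG$ and $KG^*$: - $KG$ has basis $\{u_g\}$, $u_gu_h=u_{gh}$ if $d(g)=r(h)$ (else $0$), $1=\sum_{e\in G_0}u_e$, $\Delta(u_g)=u_g\otimes u_g$, $\varepsilon(u_g)=1$, and antipode $S(u_g)=u_{g^{-1}}$. - $KG^*$ has $\Delta(v_g)=\sum_{d(h)=d(g)}v_{gh^{-1}}\otimes v_h$, $\varepsilon(\sum a_gv_g)=\sum_{e\in G_0}a_e$, and antipode $S(v_g)=v_{g^{-1}}$. - For a weak bialgebra $H$, $\varepsilon_t(x)=\sum\varepsilon(1_{(1)}x)1_{(2)}$ and $H_t=\varepsilon_t(H)$. One has $KG_t=\bigoplus_{e\in G_0}Ku_e$ and $KG^*_t=\sum_{e\in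 G_0}K\sum_{h: r(h)=e}v_h$. The algebra $\mathcal A$: - $R$ is a $KG$-module algebra via $u_g\cdot r=\beta_g(r1_{g^{-1}})$, and a right $KG_t$-module via $r\cdot z=S(z)\cdot r$; $KG$ is a left $KG_t$-module by multiplication. - $X=R\otimes_{KG_t}KG$ is a unital $K$-algebra with $(r\otimes u_g)(s\otimes u_h)=r(u_g\cdot s)\otimes u_gu_h$. - $X$ is a $KG^*$-module algebra via $v_k\cdot(r\otimes u_g)=\delta_{k,g}\,r\otimes u_g$, and a right $KG^*_t$-module via $x\cdot z=S(z)\cdot x$; $KG^*$ is a left $KG^*_t$-module by multiplication. - $\mathcal A=X\otimes_{KG^*_t}KG^*$ is the unital $K$-algebra with $(x\otimes v_g)(y\otimes v_h)=x(v_{gh^{-1}}\cdot y)\otimes v_h$ if $d(g)=d(h)$ and $0$ otherwise, and identity $1_R\otimes1_{KG}\otimes1_{KG^*}$. Elements of $\mathcal A$ are written $r\otimes u_g\otimes v_h$. *)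

(* Defs.v *)
From HB Require Import structures.
From mathcomp Require Import all_boot all_order all_algebra.
Set Implicit Arguments. Unset Strict Implicit. Unset Printing Implicit Defensive.
Import GRing.Theory.
Local Open Scope ring_scope.

(* A finite groupoid, regarded as its (finite) set of morphisms, with
   domain [dom] (d(g) = g^-1 g), codomain [cod] (r(g) = g g^-1), a
   composition [gmul g h] (meaningful when dom g = cod h) and inverse. *)
Record groupoid := Groupoid {
  gT :> finType;
  dom : gT -> gT;
  cod : gT -> gT;
  gmul : gT -> gT -> gT;
  ginv : gT -> gT;
  dom_dom : forall g, dom (dom g) = dom g;
  cod_dom : forall g, cod (dom g) = dom g;
  dom_cod : forall g, dom (cod g) = cod g;
  cod_cod : forall g, cod (cod g) = cod g;
  dom_gmul : forall g h, dom g = cod h -> dom (gmul g h) = dom h;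
  cod_gmul : forall g h, dom g = cod h -> cod (gmul g h) = cod g;
  gmulA : forall g h k, dom g = cod h -> dom h = cod k ->
            gmul g (gmul h k) = gmul (gmul g h) k;
  gmul_cod : forall g, gmul (cod g) g = g;
  gmul_dom : forall g, gmul g (dom g) = g;
  dom_ginv : forall g, dom (ginv g) = cod g;
  cod_ginv : forall g, cod (ginv g) = dom g;
  gmulVg : forall g, gmul (ginv g) g = dom g;
  gmulgV : forall g, gmul g (ginv g) = cod g
}.

Definition isId (G : groupoid) (e : G) : bool := dom e == e.

Section Setting.
Variables (K : comPzRingType) (R : algType K) (G : groupoid).

(* E g : the ideal E_g (a predicate on R); beta g : the map beta_g
   (a total function, only meaningful on E_{g^-1}); one e : the identity 1_e. *)
Definition is_ideal (I : pred R) : Prop :=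
  0 \in I /\ (forall x y, x \in I -> y \in I -> x - y \in I) /\
  (forall a x, x \in I -> a * x \in I) /\ (forall a x, x \in I -> x * a \in I) /\
  (forall (k : K) x, x \in I -> k *: x \in I).

Definition setting (E : G -> pred R) (beta : G -> R -> R) (one : G -> R) : Prop :=
  (forall g, is_ideal (E g)) /\
  (forall g x, (x \in E g) = (x \in E (cod g))) /\
  (forall g x, x \in E (ginv g) -> beta g x \in E g) /\
  (forall g x y, x \in E (ginv g) -> y \in E (ginv g) -> beta g (x + y) = beta g x + beta g y) /\
  (forall g x y, x \in E (ginv g) -> y \in E (ginv g) -> beta g (x * y) = beta g x * beta g y) /\
  (forall g (k : K) x, x \in E (ginv g) -> beta g (k *: x) = k *: beta g x) /\
  (forall g x y, x \in E (ginv g) -> y \in E (ginv g) -> beta g x = beta g y -> x = y) /\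
  (forall g y, y \in E g -> exists2 x, x \in E (ginv g) & beta g x = y) /\
  (forall e x, isId e -> x \in E e -> beta e x = x) /\
  (forall g h x, dom g = cod h -> x \in E (ginv h) -> beta g (beta h x) = beta (gmul g h) x) /\
  (forall e, isId e -> one e \in E e /\ (forall x, x \in E e -> one e * x = x /\ x * one e = x)) /\
  (* R = (+)_{e in G_0} E_e  (internal direct sum) *)
  (forall x, exists f : G -> R, (forall e, isId e -> f e \in E e) /\
                                x = \sum_(e | isId e) f e) /\
  (forall f : G -> R, (forall e, isId e -> f e \in E e) ->
     \sum_(e | isId e) f e = 0 -> forall e, isId e -> f e = 0).

(* An element  sum_g x_g delta_g  of R *_beta G is a function g |-> x_g
   (with x_g in E_g); an element  sum_{g,h} x_{g,h} delta_g # v_h  of B is a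
   function (g,h) |-> x_{g,h} (with x_{g,h} in E_g). *)
Definition skew := {ffun G -> R}.
Definition Belt := {ffun G * G -> R}.

Definition inB (E : G -> pred R) (b : Belt) : Prop := forall g h, b (g, h) \in E g.

(* (x delta_k)(y delta_l) = x beta_k(y) delta_{kl} if d(k) = r(l), else 0 *)
Definition skew_mul (beta : G -> R -> R) (x y : skew) : skew :=
  [ffun m => \sum_(k : G) \sum_(l : G | (dom k == cod l) && (gmul k l == m))
                x k * beta k (y l)].

(* v_h . a = a_h, the h-homogeneous component of a G-graded element *)
Definition vact_skew (h : G) (x : skew) : skew := [ffun m => if m == h then x m else 0].

Definition Bcomp (b : Belt) (h : G) : skew := [ffun g => b (g, h)].

(* (x # v_g)(y # v_h) = x (v_{gh^-1} . y) # v_h if d(g) = d(h), else 0 *)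
Definition B_mul (beta : G -> R -> R) (b b' : Belt) : Belt :=
  [ffun p => let: (m, h) := p in
     \sum_(g : G | dom g == dom h)
        skew_mul beta (Bcomp b g) (vact_skew (gmul g (ginv h)) (Bcomp b' h)) m].

Definition inC (E : G -> pred R) (b : Belt) : Prop :=
  inB E b /\ forall g h, dom g != cod h -> b (g, h) = 0.
Definition inD (E : G -> pred R) (b : Belt) : Prop :=
  inB E b /\ forall g h, dom g = cod h -> b (g, h) = 0.
Definition inB0 (E : G -> pred R) (b : Belt) : Prop :=
  inB E b /\ forall g h, ~ (dom g = cod g /\ cod g = cod h) -> b (g, h) = 0.

(* Since KG and KG^* are free K-modules on {u_g} and {v_h}, the K-module
   R (x)_K KG (x)_K KG^* is identified with functions (g,h) |-> r_{g,h}
   (the element  sum r_{g,h} (x) u_g (x) v_h).  A is its quotient by the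
   K-submodule [Nrel] spanned by the balancing relations over KG_t and KG^*_t. *)
Definition Arep := {ffun G * G -> R}.

(* r (x) u_g (x) v_h *)
Definition tens (r : R) (g h : G) : Arep := [ffun p => if p == (g, h) then r else 0].

(* KG-module algebra structure of R: u_g . r = beta_g (r 1_{g^-1}) *)
Definition uact (beta : G -> R -> R) (one : G -> R) (g : G) (r : R) : R :=
  beta g (r * one (cod (ginv g))).

(* Balancing over KG_t = span{u_e, e in G_0}:
   (r . u_e) (x) u_g (x) v_h - r (x) (u_e u_g) (x) v_h,
   where r . u_e = S(u_e) . r = u_{e^-1} . r  and  u_e u_g = u_{eg} if d(e)=r(g), else 0. *)
Definition rel1 beta one (r : R) (e g h : G) : Arep :=
  tens (uact beta one (ginv e) r) g h -
  (if dom e == cod g then tens r (gmul e g) h else 0).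

(* Balancing over KG^*_t = span{w_e = sum_{r(k)=e} v_k, e in G_0}:
   (x . w_e) (x) v_h - x (x) (w_e v_h), with x = r (x) u_g,
   x . w_e = S(w_e) . x = sum_{r(k)=e} v_{k^-1} . x,
   v_j . (r (x) u_g) = delta_{j,g} r (x) u_g,  and  w_e v_h = sum_{r(k)=e} v_k v_h. *)
Definition rel2 (r : R) (e g h : G) : Arep :=
  \sum_(k : G | cod k == e) (if ginv k == g then tens r g h else 0) -
  \sum_(k : G | cod k == e) (if k == h then tens r g k else 0).

Inductive Nrel beta one : Arep -> Prop :=
| Nrel0 : Nrel beta one 0
| NrelD x y : Nrel beta one x -> Nrel beta one y -> Nrel beta one (x + y)
| NrelZ (k : K) x : Nrel beta one x -> Nrel beta one (k *: x)
| Nrel1 r e g h : isId e -> Nrel beta one (rel1 beta one r e g h)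
| Nrel2 r e g h : isId e -> Nrel beta one (rel2 r e g h).

Definition Aeq beta one (x y : Arep) : Prop := Nrel beta one (x - y).

(* multiplication on X = R (x) KG:  (r (x) u_g)(s (x) u_h) = r (u_g . s) (x) u_g u_h *)
Definition Xmul beta one (x y : {ffun G -> R}) : {ffun G -> R} :=
  [ffun m => \sum_(g : G) \sum_(h : G | (dom g == cod h) && (gmul g h == m))
                x g * uact beta one g (y h)].

(* KG^*-action on X: v_k . (r (x) u_g) = delta_{k,g} r (x) u_g *)
Definition vact_X (k : G) (x : {ffun G -> R}) : {ffun G -> R} :=
  [ffun m => if m == k then x m else 0].

Definition Acomp (a : Arep) (h : G) : {ffun G -> R} := [ffun g => a (g, h)].

(* multiplication on A: (x (x) v_g)(y (x) v_h) = x (v_{gh^-1} . y) (x) v_h if d(g)=d(h), else 0 *)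
Definition A_mul beta one (a a' : Arep) : Arep :=
  [ffun p => let: (m, h) := p in
     \sum_(g : G | dom g == dom h)
        Xmul beta one (Acomp a g) (vact_X (gmul g (ginv h)) (Acomp a' h)) m].

(** * The map phi : B -> A,  a_g delta_g # v_h |-> a_g (x) u_g (x) v_h *)
Definition phi (b : Belt) : Arep := [ffun p => b p].

End Setting.

(* Main.v *)
Require Import Defs.
From HB Require Import structures.
From mathcomp Require Import all_boot all_order all_algebra.
Import GRing.Theory.
Set Implicit Arguments. Unset Strict Implicit.
Local Open Scope ring_scope.

Lemma ginvK (G : groupoid) (g : G) : ginv (ginv g) = g.
Proof.
have dx : dom (ginv (ginv g)) = dom g by rewrite dom_ginv cod_ginv.
rewrite -[LHS]gmul_dom dx -(gmulVg g) gmulA; last by rewrite dom_ginv.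
  by rewrite gmulVg dom_ginv gmul_cod.
by rewrite dx cod_ginv.
Qed.

Lemma ginv_id (G : groupoid) (e : G) : isId e -> ginv e = e.
Proof.
move/eqP=> de.
have ce : cod e = e by rewrite -de cod_dom.
by rewrite -[LHS]gmul_dom dom_ginv ce gmulVg de.
Qed.

Lemma isId_cod (G : groupoid) (g : G) : isId (cod g).
Proof. by rewrite /isId dom_cod. Qed.

Lemma isId_dom (G : groupoid) (g : G) : isId (dom g).
Proof. by rewrite /isId dom_dom. Qed.

Lemma sum_inv (G : groupoid) (V : zmodType) (e g : G) (x : V) :
  \sum_(k : G | cod k == e) (if ginv k == g then x else 0) = if dom g == e then x else 0.
Proof.
case: ifP => He.
  rewrite (bigD1 (ginv g)) /=; last by rewrite cod_ginv.
  rewrite ginvK eqxx big1 ?addr0 // => k /andP[_ Hk].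
  case: eqP => // Hkg; by rewrite -Hkg ginvK eqxx in Hk.
apply: big1 => k /eqP Hk; case: eqP => // Hkg.
by rewrite -Hkg dom_ginv Hk eqxx in He.
Qed.

Lemma sum_eq (G : groupoid) (V : zmodType) (e h : G) (F : G -> V) :
  \sum_(k : G | cod k == e) (if k == h then F k else 0) = if cod h == e then F h else 0.
Proof.
case: ifP => He.
  rewrite (bigD1 h) //= eqxx big1 ?addr0 // => k /andP[_ Hk].
  by rewrite (negbTE Hk).
apply: big1 => k /eqP Hk; case: eqP => // Hkg.
by rewrite -Hkg Hk eqxx in He.
Qed.

Lemma rel2E (K : comPzRingType) (R : algType K) (G : groupoid) (r : R) (e g h : G) :
  rel2 r e g h = (if dom g == e then tens r g h else 0) - (if cod h == e then tens r g h else 0).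
Proof.
rewrite /rel2 sum_inv.
by rewrite sum_eq.
Qed.


Lemma idealD (K : comPzRingType) (R : algType K) (I : pred R) : is_ideal I -> forall x y, x \in I -> y \in I -> x + y \in I.
Proof.
move=> [I0 [IB _]] x y Hx Hy.
have Hn : - y \in I by rewrite -sub0r; apply: IB.
by rewrite -[y]opprK; apply: IB.
Qed.

Lemma idealS (K : comPzRingType) (R : algType K) (I : pred R) (T : finType) (P : pred T) (F : T -> R) :
  is_ideal I -> (forall i, P i -> F i \in I) -> \sum_(i | P i) F i \in I.
Proof.
move=> HI HF; apply: (big_ind (fun x => x \in I)) => //.
  by case: HI.
by move=> x y; apply: idealD.
Qed.

Lemma orth (K : comPzRingType) (R : algType K) (G : groupoid) (E : G -> pred R) beta one (e e' : G) (x : R) :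
  setting E beta one -> isId e -> isId e' -> e != e' -> x \in E e -> x \in E e' -> x = 0.
Proof.
move=> [Hid [_ [_ [_ [_ [_ [_ [_ [_ [_ [_ [_ Huniq]]]]]]]]]]]] He He' Hne Hx Hx'.
pose f := fun i : G => if i == e then x else if i == e' then - x else 0.
have Hf : forall i, isId i -> f i \in E i.
  move=> i _; rewrite /f; case: eqP => [->//|_]; case: eqP => [->|_].
    by case: (Hid e') => I0 [IB _]; rewrite -sub0r; apply: IB.
  by case: (Hid i).
have := Huniq f Hf; rewrite (bigD1 e) //= (bigD1 e') /=; last by rewrite He' eq_sym.
rewrite big1; last first.
  by move=> i /andP[/andP[_ H1] H2]; rewrite /f (negbTE H1) (negbTE H2).
rewrite /f eqxx eq_sym (negbTE Hne) eqxx addr0 subrr => H.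
by have := H erefl e He; rewrite eqxx.
Qed.

Lemma one_idem (K : comPzRingType) (R : algType K) (G : groupoid) (E : G -> pred R) beta one (e : G) :
  setting E beta one -> isId e -> one e * one e = one e.
Proof.
move=> HS He; have [_ [_ [_ [_ [_ [_ [_ [_ [_ [_ [Hone _]]]]]]]]]]] := HS.
by have [H1 H2] := Hone e He; have [-> _] := H2 _ H1.
Qed.

Lemma one_orth (K : comPzRingType) (R : algType K) (G : groupoid) (E : G -> pred R) beta one (e e' : G) :
  setting E beta one -> isId e -> isId e' -> e != e' -> one e * one e' = 0.
Proof.
move=> HS He He' Hne; have [Hid [_ [_ [_ [_ [_ [_ [_ [_ [_ [Hone _]]]]]]]]]]] := HS.
apply: (@orth K R G E beta one e e' (one e * one e') HS He He' Hne).
  by case: (Hid e) => _ [_ [_ [H _]]]; apply: H; case: (Hone e He).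
by case: (Hid e') => _ [_ [H _]]; apply: H; case: (Hone e' He').
Qed.

Lemma Eone (K : comPzRingType) (R : algType K) (G : groupoid) (E : G -> pred R) beta one (g : G) x :
  setting E beta one -> x \in E g -> x * one (cod g) = x.
Proof.
move=> HS; have [_ [HEc [_ [_ [_ [_ [_ [_ [_ [_ [Hone _]]]]]]]]]]] := HS.
rewrite HEc => Hx; have [_ H2] := Hone _ (isId_cod g).
by have [_ ->] := H2 _ Hx.
Qed.

Lemma Nrel_inv (K : comPzRingType) (R : algType K) (G : groupoid) (E : G -> pred R) beta one (a : Arep R G) :
  setting E beta one -> Nrel beta one a ->
  forall g h, dom g = cod h -> a (g, h) * one (cod g) = 0.
Proof.
move=> HS; elim => {a}.
- by move=> g h _; rewrite ffunE mul0r.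
- by move=> x y _ Hx _ Hy g h Hgh; rewrite ffunE mulrDl Hx ?Hy ?addr0.
- by move=> k x _ Hx g h Hgh; rewrite ffunE -scalerAl Hx ?scaler0.
- move=> r e g' h' He g h Hgh.
  have [Hid [_ [_ [_ [_ [_ [_ [_ [Hbid [_ [Hone _]]]]]]]]]]] := HS.
  have Hue : uact beta one (ginv e) r = r * one e.
    rewrite /uact ginvK ginv_id //.
    have ce : cod e = e by move/eqP: He => de; rewrite -de cod_dom.
    rewrite ce Hbid //.
    by case: (Hid e) => _ [_ [H _]]; apply: H; case: (Hone e He).
  rewrite /rel1 Hue !ffunE.
  case: (dom e =P cod g') => [Hde|Hne].
    have ece : e = cod g' by move/eqP: He => de; rewrite -Hde.
    rewrite ece gmul_cod ?ffunE.
    case: eqP => [[-> _]|_]; last by rewrite subrr mul0r.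
    by rewrite mulrBl -mulrA (one_idem HS) ?subrr //; exact: isId_cod.
    rewrite ffunE subr0; case: eqP => [[-> _]|_]; last by rewrite mul0r.
  rewrite -mulrA (one_orth HS) ?mulr0 //; first exact: isId_cod.
  by move/eqP: He => de; apply/eqP; rewrite -de.
- move=> r e g' h' He g h Hgh.
  rewrite rel2E; case: ((g, h) =P (g', h')) => [[<- <-]|Hne].
    by rewrite Hgh; case: ifP => _; rewrite subrr ffunE mul0r.
  by case: ifP => _; case: ifP => _; rewrite !ffunE ?(introF eqP Hne) ?subrr ?mul0r.
Qed.

Lemma tens_sum (K : comPzRingType) (R : algType K) (G : groupoid) (x : Arep R G) : x = \sum_(p : G * G) tens (x p) p.1 p.2.
Proof.
apply/ffunP => q; rewrite sum_ffunE (bigD1 q) //= big1 ?addr0.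
  by rewrite ffunE -surjective_pairing eqxx.
by move=> p Hp; rewrite ffunE -surjective_pairing eq_sym (negbTE Hp).
Qed.

Lemma Dspan (K : comPzRingType) (R : algType K) (G : groupoid) beta (one : G -> R) (a : Arep R G) :
  (forall g h, dom g = cod h -> a (g, h) = 0) -> Nrel beta one a.
Proof.
move=> Ha; rewrite (tens_sum a).
apply: (big_ind (Nrel beta one)); [exact: Nrel0 | by move=> ? ?; apply: NrelD |].
case=> g h _ /=.
have [Hgh|Hne] := eqVneq (dom g) (cod h).
  have -> : tens (a (g, h)) g h = 0.
    by apply/ffunP => p; rewrite !ffunE Ha //; case: ifP.
  exact: Nrel0.
have <- : rel2 (a (g, h)) (dom g) g h = tens (a (g, h)) g h.
  by rewrite rel2E eqxx eq_sym (negbTE Hne) subr0.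
by apply: Nrel2; apply: isId_dom.
Qed.



Lemma phiK (K : comPzRingType) (R : algType K) (G : groupoid) (b : Belt R G) : phi b = b.
Proof. by apply/ffunP => p; rewrite ffunE. Qed.

Lemma beta0 (K : comPzRingType) (R : algType K) (G : groupoid) (E : G -> pred R) beta one (k : G) :
  setting E beta one -> beta k 0 = 0.
Proof.
move=> [Hid [_ [_ [HbD _]]]].
have H0 : (0 : R) \in E (ginv k) by case: (Hid (ginv k)).
have := HbD k 0 0 H0 H0; rewrite addr0 => H.
by apply: (addrI (beta k 0)); rewrite addr0 -H.
Qed.

Lemma mulE (K : comPzRingType) (R : algType K) (G : groupoid) (E : G -> pred R) beta one (b b' : Belt R G) :
  setting E beta one -> inB E b' ->
  B_mul beta b b' = A_mul beta one (phi b) (phi b').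
Proof.
move=> HS Hb'; rewrite !phiK.
apply/ffunP => -[m h]; rewrite !ffunE; apply: eq_bigr => g _.
rewrite !ffunE; apply: eq_bigr => k _; apply: eq_bigr => l /andP[/eqP Hkl _].
rewrite !ffunE /uact cod_ginv.
congr (_ * beta k _); case: ifP => _; last by rewrite mul0r.
by rewrite Hkl (Eone HS (Hb' l h)).
Qed.



Lemma B0mul (K : comPzRingType) (R : algType K) (G : groupoid) (E : G -> pred R) beta one (b b' : Belt R G) :
  setting E beta one -> inB0 E b -> inB0 E b' -> inB0 E (B_mul beta b b').
Proof.
move=> HS [Hb Hb0] [Hb' Hb0'].
have [Hid [HEc _]] := HS.
split.
  move=> m h; rewrite ffunE; apply: idealS => // g _.
  rewrite ffunE; apply: idealS => // k _; apply: idealS => // l /andP[/eqP Hkl /eqP Hm].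
  have : b (k, g) \in E m.
    by rewrite HEc -Hm cod_gmul // -HEc.
  by move=> Hx; have [_ [_ [_ [H _]]]] := Hid m; rewrite ffunE; apply: H.
move=> m h Hmh; rewrite ffunE; apply: big1 => g _.
rewrite ffunE; apply: big1 => k _; apply: big1 => l /andP[/eqP Hkl /eqP Hm].
rewrite !ffunE.
case: (boolP ((dom k == cod k) && (cod k == cod g))) => [/andP[/eqP Hk _]|Hk]; last first.
  rewrite Hb0 ?mul0r // => -[H1 H2]; move: Hk; by rewrite H1 H2 !eqxx.
case: ifP => _; last by rewrite (beta0 k HS) mulr0.
case: (boolP ((dom l == cod l) && (cod l == cod h))) => [/andP[/eqP Hl1 /eqP Hl2]|Hl]; last first.
  rewrite Hb0' ?(beta0 k HS) ?mulr0 // => -[H1 H2]; move: Hl; by rewrite H1 H2 !eqxx.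
exfalso; apply: Hmh; rewrite -Hm dom_gmul // cod_gmul //.
by split; rewrite -Hk Hkl ?Hl1 Hl2.
Qed.


Unset Implicit Arguments. Set Strict Implicit.
Theorem theorem5p2 (K : comPzRingType) (R : algType K) (G : groupoid)
  (E : G -> pred R) (beta : G -> R -> R) (one : G -> R) :
  setting E beta one ->
  ((forall b b', inB E b -> inB E b' ->
      Aeq beta one (phi (b + b')) (phi b + phi b')) /\
   (forall (k : K) b, inB E b -> Aeq beta one (phi (k *: b)) (k *: phi b)) /\
   (forall b b', inB E b -> inB E b' ->
      Aeq beta one (phi (B_mul beta b b')) (A_mul beta one (phi b) (phi b')))) /\
  (forall b, inB E b -> (Aeq beta one (phi b) 0 <-> inD E b)) /\
  (forall b, inB E b -> exists2 c, inC E c & Aeq beta one (phi b) (phi c)) /\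
  (forall c c', inC E c -> inC E c' -> Aeq beta one (phi c) (phi c') -> c = c') /\
  ((forall b b', inB0 E b -> inB0 E b' -> inB0 E (b + b') /\ inB0 E (B_mul beta b b')) /\
   (forall (k : K) b, inB0 E b -> inB0 E (k *: b)) /\
   (forall b b', inB0 E b -> inB0 E b' -> Aeq beta one (phi b) (phi b') -> b = b')).
Proof.
move=> HS; have [Hid [HEc _]] := HS.
have injC : forall c c', inC E c -> inC E c' -> Aeq beta one (phi c) (phi c') -> c = c'.
  move=> c c' [Hc Hc0] [Hc' Hc0']; rewrite /Aeq !phiK => /(Nrel_inv HS) H.
  apply/ffunP => -[g h]; case: (dom g =P cod h) => Hgh.
    have Hm : c (g, h) - c' (g, h) \in E g.
      by have [_ [IB _]] := Hid g; apply: IB.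
    by have := H g h Hgh; rewrite !ffunE (Eone HS Hm) => /eqP; rewrite subr_eq0 => /eqP.
  by rewrite Hc0 ?Hc0' //; apply/eqP.
split; [split; [|split]|split; [|split; [|split; [|split; [|split]]]]].
- by move=> b b' _ _; rewrite /Aeq !phiK subrr; apply: Nrel0.
- by move=> k b _; rewrite /Aeq !phiK subrr; apply: Nrel0.
- by move=> b b' _ Hb'; rewrite /Aeq (mulE b HS Hb') phiK subrr; apply: Nrel0.
- move=> b Hb; rewrite /Aeq phiK subr0; split.
    move/(Nrel_inv HS) => H; split=> // g h Hgh.
    by rewrite -(Eone HS (Hb g h)) H.
  by case=> _ HD; apply: Dspan.
- move=> b Hb; exists [ffun p => if dom p.1 == cod p.2 then b p else 0].
    split.
      move=> g h; rewrite ffunE; case: ifP => _ //.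
      by have [] := Hid g.
    by move=> g h Hne; rewrite ffunE /= (negbTE Hne).
  rewrite /Aeq !phiK; apply: Dspan => g h Hgh.
  by rewrite !ffunE /= Hgh eqxx subrr.
- exact: injC.
- move=> b b' Hb Hb'; split; last exact: (B0mul HS).
  move: Hb Hb' => [Hb Hb0] [Hb' Hb0']; split.
    by move=> g h; rewrite ffunE; apply: (idealD (Hid g)).
  by move=> g h H; rewrite ffunE Hb0 ?Hb0' ?addr0.
- move=> k b [Hb Hb0]; split.
    by move=> g h; rewrite ffunE; have [_ [_ [_ [_ H]]]] := Hid g; apply: H.
  by move=> g h H; rewrite ffunE Hb0 ?scaler0.
- have B0C : forall b, inB0 E b -> inC E b.
    move=> b [Hb Hb0]; split=> // g h Hne; apply: Hb0 => -[H1 H2].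
    by move: Hne; rewrite H1 H2 eqxx.
  by move=> b b' Hb Hb'; apply: injC; apply: B0C.
Qed.
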